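(* Let $D\ge1$, let $Q_D$ be the $D$-dimensional hypercube on $X=\{0,1\}^D$ with adjacency matrix $A$, and let $E_1V$ be the eigenspace of $A$ in $V=\mathbb{R}^X$ for the eigenvalue $D-2$. Every antisymmetric $A$-like matrix $B$ leaves $E_1V$ invariant, and the restriction map $B\mapsto B|_{E_1V}$ is a bijection from the space of antisymmetric $A$-like matrices onto the space of linear maps $T:E_1V\to E_1V$ satisfying $\langle Tu,w\rangle=-\langle u,Tw\rangle$ for all $u,w\in E_1V$.
   Context: $Q_D$ is the graph with vertex set $X=\{0,1\}^D$, two vertices adjacent iff they differ in exactly one coordinate. Matrices are real with rows and columns indexed by $X$ and act on $V=\mathbb{R}^X$, equipped with the standard inner product $\langle u,w\rangle=u^tw$. A matrix $B$ is $A$-like if $BA=AB$ and $B_{xy}=0$ for all $x,y\in X$ that are neither equal nor adjacent; it is antisymmetric if $B^t=-B$. *)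

(* Defs.v *)
From mathcomp Require Import all_boot all_order all_algebra.
Set Implicit Arguments. Unset Strict Implicit. Unset Printing Implicit Defensive.
Import Order.TTheory GRing.Theory Num.Theory.
Local Open Scope ring_scope.

Definition cube (D : nat) : finType := D.-tuple bool.

Definition cube_adj (D : nat) (x y : cube D) : bool :=
  #|[set i : 'I_D | tnth x i != tnth y i]| == 1%N.

Definition cmx (R : numDomainType) (D : nat) := cube D -> cube D -> R.
Definition cvec (R : numDomainType) (D : nat) := cube D -> R.

Definition adjA (R : numDomainType) (D : nat) : cmx R D :=
  fun x y => (cube_adj x y)%:R.
Arguments adjA R D : clear implicits.

Definition cmul (R : numDomainType) (D : nat) (B C : cmx R D) : cmx R D :=
  fun x z => \sum_(y : cube D) B x y * C y z.
Definition capply (R : numDomainType) (D : nat) (B : cmx R D) (v : cvec R D)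
  : cvec R D := fun x => \sum_(y : cube D) B x y * v y.

Definition cdot (R : numDomainType) (D : nat) (u w : cvec R D) : R :=
  \sum_(x : cube D) u x * w x.

Definition A_like (R : numDomainType) (D : nat) (B : cmx R D) : Prop :=
  cmul B (adjA R D) = cmul (adjA R D) B /\
  forall x y : cube D, x != y -> ~~ cube_adj x y -> B x y = 0.

Definition antisym (R : numDomainType) (D : nat) (B : cmx R D) : Prop :=
  forall x y : cube D, B y x = - B x y.

Definition inE1 (R : numDomainType) (D : nat) (v : cvec R D) : Prop :=
  capply (adjA R D) v = (fun x => (D%:R - 2) * v x).

(* A linear map T : E_1V -> E_1V, represented by a function on V whose
   values off E_1V are irrelevant. *)
Definition E1_linear_endo (R : numDomainType) (D : nat)
  (T : cvec R D -> cvec R D) : Prop :=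
  (forall v, inE1 v -> inE1 (T v)) /\
  (forall (a : R) (u w : cvec R D), inE1 u -> inE1 w ->
     T (fun x => a * u x + w x) = (fun x => a * T u x + T w x)).

Definition E1_skew (R : numDomainType) (D : nat)
  (T : cvec R D -> cvec R D) : Prop :=
  forall u w : cvec R D, inE1 u -> inE1 w -> cdot (T u) w = - cdot u (T w).

(* Main.v *)
Require Import Defs.
From mathcomp Require Import all_boot all_order all_algebra.
From Stdlib Require Import FunctionalExtensionality.
From mathcomp Require Import ring.
Import Order.TTheory GRing.Theory Num.Theory.
Local Open Scope ring_scope.
Set Implicit Arguments. Unset Strict Implicit.

Section Cube.
Variable R : realFieldType.
Variable D : nat.
Notation X := (cube D).

Definition flip (x : X) (k : 'I_D) : X :=
  [tuple (if j == k then ~~ tnth x j else tnth x j) | j < D].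

Lemma tnth_flip x k j : tnth (flip x k) j = if j == k then ~~ tnth x j else tnth x j.
Proof. by rewrite /flip tnth_mktuple. Qed.

Lemma flipK x k : flip (flip x k) k = x.
Proof. apply: eq_from_tnth => j; rewrite !tnth_flip; case: (j == k) => //; exact: negbK. Qed.

Lemma flipC x m n : flip (flip x m) n = flip (flip x n) m.
Proof. apply: eq_from_tnth => j; rewrite !tnth_flip; by case: (j == n); case: (j == m). Qed.

Lemma flip_inj x k l : flip x k = flip x l -> k = l.
Proof.
move=> /(congr1 (fun t => tnth t k)); rewrite !tnth_flip eqxx.
case: eqP => // _; by case: (tnth x k).
Qed.

Lemma flip_neq x k : (x == flip x k) = false.
Proof.
apply/eqP => /(congr1 (fun t => tnth t k)); rewrite !tnth_flip eqxx; by case: (tnth x k).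
Qed.

Lemma adj_flip x k : cube_adj x (flip x k).
Proof.
rewrite /cube_adj; apply/eqP.
suff -> : [set i | tnth x i != tnth (flip x k) i] = [set k] by rewrite cards1.
apply/setP => i; rewrite !inE tnth_flip; case: (i == k); by case: (tnth x i).
Qed.

Lemma adjP x y : cube_adj x y -> exists k, y = flip x k.
Proof.
rewrite /cube_adj => /cards1P [k Hk]; exists k.
apply: eq_from_tnth => j; rewrite tnth_flip.
have := congr1 (fun S : {set 'I_D} => j \in S) Hk; rewrite /= !inE.
case: (j == k); case: (tnth x j); case: (tnth y j) => //.
Qed.

Lemma adj_sym (x y : X) : cube_adj x y = cube_adj y x.
Proof. rewrite /cube_adj; congr (_ == _); apply: eq_card => i; by rewrite !inE eq_sym. Qed.

Definition ind (b : bool) : R := b%:R.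

Lemma sum_delta (a : X) (g : X -> R) : \sum_y ind (y == a) * g y = g a.
Proof.
rewrite (bigD1 a) //= /ind eqxx mul1r big1 ?addr0 // => y /negbTE ->; by rewrite mul0r.
Qed.

Lemma sum_flip_hit x k0 (F : 'I_D -> R) : \sum_k ind (flip x k0 == flip x k) * F k = F k0.
Proof.
rewrite (bigD1 k0) //= /ind eqxx mul1r big1 ?addr0 // => k /negbTE Hk.
case: eqP => [/flip_inj E|]; last by rewrite mul0r.
by rewrite E eqxx in Hk.
Qed.

Lemma sum_flip_miss x y (F : 'I_D -> R) : (forall k, y != flip x k) ->
  \sum_k ind (y == flip x k) * F k = 0.
Proof. move=> H; apply: big1 => k _; by rewrite (negbTE (H k)) /ind mul0r. Qed.

Definition mkB (f : 'I_D -> X -> R) : cmx R D :=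
  fun x y => \sum_m ind (y == flip x m) * f m x.

Lemma adjA_mkB : adjA R D = mkB (fun _ _ => 1).
Proof.
apply: functional_extensionality => x; apply: functional_extensionality => y.
rewrite /adjA /mkB.
case Ha: (cube_adj x y).
  have [k ->] := adjP Ha.
  by rewrite (sum_flip_hit x k (fun _ => 1)).
rewrite sum_flip_miss //= => k; apply/eqP => E; by rewrite E adj_flip in Ha.
Qed.

Lemma capply_mkB f v x : capply (mkB f) v x = \sum_m f m x * v (flip x m).
Proof.
rewrite /capply /mkB.
under eq_bigr => y _ do rewrite mulr_suml.
rewrite exchange_big /=; apply: eq_bigr => m _.
rewrite -(sum_delta (flip x m) (fun y => f m x * v y)).
apply: eq_bigr => y _; by rewrite mulrA mulrC mulrA.
Qed.

Lemma cmul_mkB f C x z : cmul (mkB f) C x z = \sum_m f m x * C (flip x m) z.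
Proof. exact: (capply_mkB f (fun y => C y z) x). Qed.

Lemma capplyA v x : capply (adjA R D) v x = \sum_m v (flip x m).
Proof. rewrite adjA_mkB capply_mkB; apply: eq_bigr => m _; by rewrite mul1r. Qed.


Definition sgn (b : bool) : R := if b then -1 else 1.
Definition chi (i : 'I_D) : cvec R D := fun x => sgn (tnth x i).
Definition chiS (S : {set 'I_D}) : cvec R D :=
  fun x => \prod_i (if i \in S then sgn (tnth x i) else 1).

Lemma sgn_sq b : sgn b * sgn b = 1.
Proof. case: b; rewrite /sgn; ring. Qed.

Lemma chi_flip i x m : chi i (flip x m) = (if i == m then -1 else 1) * chi i x.
Proof.
rewrite /chi tnth_flip; case: (i == m); last by rewrite mul1r.
case: (tnth x i); rewrite /sgn /=; ring.
Qed.

Lemma chiS_flip (S : {set 'I_D}) x m : chiS S (flip x m) = (if m \in S then -1 else 1) * chiS S x.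
Proof.
rewrite /chiS.
rewrite (eq_bigr (fun i => (if (i == m) && (i \in S) then -1 else 1) *
     (if i \in S then sgn (tnth x i) else 1))); last first.
  move=> i _; rewrite tnth_flip; case: (i \in S); rewrite ?andbT ?andbF ?mul1r //.
  case: (i == m); rewrite ?mul1r //; case: (tnth x i); rewrite /sgn /=; ring.
rewrite big_split /=; congr (_ * _).
rewrite (bigD1 m) //= eqxx /= big1 ?mulr1 // => i /negbTE ->; by [].
Qed.

Lemma sum_eps (a : 'I_D -> R) m :
  \sum_l a l * (if l == m then -1 else 1) = \sum_l a l - 2 * a m.
Proof.
rewrite (bigD1 m) //= [in RHS](bigD1 m) //= eqxx.
rewrite (eq_bigr (fun l => a l)); last by move=> l /negbTE ->; rewrite mulr1.
ring.
Qed.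

Lemma sum_epsS (S : {set 'I_D}) : \sum_m (if m \in S then -1 else 1 : R) = D%:R - 2 * #|S|%:R.
Proof.
rewrite (eq_bigr (fun m => 1 - 2 * (if m \in S then 1 else 0))); last first.
  by move=> m _; case: (m \in S); ring.
rewrite sumrB sumr_const card_ord -mulr_sumr -big_mkcond /= sumr_const.
rewrite -[1 *+ D]mulr_natl -[1 *+ #|S|]mulr_natl !mulr1 //.
Qed.

Lemma capply_chiS S x :
  capply (adjA R D) (chiS S) x = (D%:R - 2 * #|S|%:R) * chiS S x.
Proof.
rewrite capplyA (eq_bigr (fun m => (if m \in S then -1 else 1) * chiS S x)).
  by rewrite -mulr_suml sum_epsS.
by move=> m _; rewrite chiS_flip.
Qed.

Lemma chiS1 i x : chiS [set i] x = chi i x.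
Proof.
rewrite /chiS (bigD1 i) //= inE eqxx big1 ?mulr1 // => j /negbTE Hj.
by rewrite inE Hj.
Qed.

Lemma chi_inE1 i : inE1 (chi i).
Proof.
apply: functional_extensionality => x.
rewrite (_ : chi i = chiS [set i]); last by apply: functional_extensionality => y; rewrite chiS1.
by rewrite capply_chiS cards1 mulr1.
Qed.

Lemma inversion (x y : X) : \sum_S chiS S x * chiS S y = 2 ^+ D * ind (x == y).
Proof.
rewrite (eq_bigr (fun S : {set 'I_D} => \prod_i (if i \in S then sgn (tnth x i) * sgn (tnth y i) else 1))); last first.
  move=> S _; rewrite /chiS -big_split /=; apply: eq_bigr => i _.
  by case: (i \in S); rewrite ?mulr1.
have := @bigA_distr R 0 1 *%R +%R 'I_D (fun i => sgn (tnth x i) * sgn (tnth y i)) (fun _ => 1).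
move=> /= <-.
case: (boolP [forall i, tnth x i == tnth y i]) => [/forallP H|/forallPn [i Hi]].
  have Exy : x = y by apply: eq_from_tnth => i; apply/eqP.
  rewrite Exy eqxx /ind mulr1 (eq_bigr (fun _ => 2)).
    by rewrite prodr_const card_ord.
  by move=> i _; rewrite sgn_sq.
have -> : (x == y) = false.
  apply/eqP => Exy; by rewrite Exy eqxx in Hi.
rewrite /ind mulr0 (bigD1 i) //=.
have -> : sgn (tnth x i) * sgn (tnth y i) + 1 = 0.
  move: Hi; case: (tnth x i); case: (tnth y i) => //= _; rewrite /sgn; ring.
by rewrite mul0r.
Qed.


Lemma cdotA_sym (u w : cvec R D) :
  cdot (capply (adjA R D) u) w = cdot u (capply (adjA R D) w).
Proof.
rewrite /cdot /capply.
under eq_bigr => x _ do rewrite mulr_suml.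
rewrite exchange_big /=; apply: eq_bigr => y _.
rewrite mulr_sumr; apply: eq_bigr => x _.
rewrite /adjA adj_sym; ring.
Qed.

Lemma E1_orth (v : cvec R D) (S : {set 'I_D}) : inE1 v -> #|S| != 1%N ->
  cdot v (chiS S) = 0.
Proof.
move=> Hv HS.
set c := cdot v (chiS S).
have H1 : cdot (capply (adjA R D) v) (chiS S) = (D%:R - 2) * c.
  rewrite Hv /c /cdot mulr_sumr; apply: eq_bigr => x _; ring.
have H2 : cdot v (capply (adjA R D) (chiS S)) = (D%:R - 2 * #|S|%:R) * c.
  rewrite /c /cdot mulr_sumr; apply: eq_bigr => x _; rewrite capply_chiS; ring.
rewrite cdotA_sym H2 in H1.
have E : (#|S|%:R - 1) * c * 2 = (D%:R - 2) * c - (D%:R - 2 * #|S|%:R) * c by ring.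
rewrite H1 subrr in E.
move/eqP: E; rewrite !mulf_eq0 pnatr_eq0 /= orbF subr_eq0 pnatr_eq1 (negbTE HS) /=.
by move/eqP.
Qed.

Lemma span_E1 (v : cvec R D) x : inE1 v ->
  v x = \sum_i (cdot v (chi i) / 2 ^+ D) * chi i x.
Proof.
move=> Hv.
have n2 : (2 ^+ D : R) != 0 by rewrite expf_neq0 // pnatr_eq0.
have E : forall y, ind (y == x) = (2 ^+ D)^-1 * \sum_S chiS S x * chiS S y.
  by move=> y; rewrite inversion mulKf // eq_sym.
have -> : v x = \sum_y ind (y == x) * v y by rewrite sum_delta.
under eq_bigr => y _ do rewrite E -mulrA mulr_suml.
rewrite -mulr_sumr exchange_big /=.
have -> : \sum_S \sum_y chiS S x * chiS S y * v y = \sum_S chiS S x * cdot v (chiS S).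
  apply: eq_bigr => S _; rewrite /cdot mulr_sumr; apply: eq_bigr => y _; ring.
rewrite (bigID (fun S : {set 'I_D} => #|S| == 1%N)) /=.
rewrite [X in _ + X]big1 ?addr0; last by move=> S HS; rewrite E1_orth // mulr0.
rewrite big_cards1 mulr_sumr; apply: eq_bigr => i _.
have -> : cdot v (chiS [set i]) = cdot v (chi i).
  by rewrite /cdot; apply: eq_bigr => y _; rewrite chiS1.
rewrite chiS1; ring.
Qed.


Lemma twice0 (a : R) : a = - a -> a = 0.
Proof.
move=> E; have : 2 * a = 0 by rewrite (_ : 2 * a = a + a); [rewrite {1}E addNr | ring].
by move/eqP; rewrite mulf_eq0 pnatr_eq0 /= => /eqP.
Qed.

Lemma antisym_diag (B : cmx R D) x : antisym B -> B x x = 0.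
Proof. move=> HB; exact: twice0 (HB x x). Qed.

Lemma decomp (B : cmx R D) : antisym B -> A_like B ->
  B = mkB (fun m x => B x (flip x m)).
Proof.
move=> HB [_ HL].
apply: functional_extensionality => x; apply: functional_extensionality => y.
rewrite /mkB.
case: (eqVneq x y) => [<-|Hxy].
  rewrite antisym_diag //; symmetry; apply: big1 => m _; by rewrite flip_neq /ind mul0r.
case Ha: (cube_adj x y).
  have [k ->] := adjP Ha.
  by rewrite (sum_flip_hit x k (fun m => B x (flip x m))).
rewrite HL ?Ha // sum_flip_miss // => k; apply/eqP => E; by rewrite E adj_flip in Ha.
Qed.

Lemma sum_zero (B : cmx R D) x : antisym B -> A_like B ->
  \sum_m B x (flip x m) = 0.
Proof.
move=> HB HL.
have Hd := decomp HB HL.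
have HC := congr1 (fun M => M x x) (proj1 HL); simpl in HC.
rewrite {1}Hd cmul_mkB adjA_mkB cmul_mkB in HC.
have E1 : \sum_m B x (flip x m) * mkB (fun _ _ => 1) (flip x m) x = \sum_m B x (flip x m).
  apply: eq_bigr => m _; by rewrite -adjA_mkB /adjA adj_sym adj_flip mulr1.
have E2 : \sum_m 1 * B (flip x m) x = - \sum_m B x (flip x m).
  rewrite -sumrN; apply: eq_bigr => m _; by rewrite mul1r HB.
rewrite E1 E2 in HC.
exact: twice0.
Qed.

Lemma capply_mkB_chi f i x : \sum_m f m x = 0 ->
  capply (mkB f) (chi i) x = -2 * f i x * chi i x.
Proof.
move=> Hs; rewrite capply_mkB.
rewrite (eq_bigr (fun m => (f m x * (if m == i then -1 else 1)) * chi i x)); last first.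
  by move=> m _; rewrite chi_flip eq_sym mulrA.
rewrite -mulr_suml sum_eps Hs; ring.
Qed.

Lemma chi_neq0 i x : chi i x != 0.
Proof. rewrite /chi /sgn; case: (tnth x i); by rewrite ?oppr_eq0 oner_eq0. Qed.

Lemma capply_cmul (M N : cmx R D) v x :
  capply (cmul M N) v x = capply M (capply N v) x.
Proof.
rewrite /capply /cmul.
under eq_bigr => y _ do rewrite mulr_suml.
rewrite exchange_big /=; apply: eq_bigr => y _.
rewrite mulr_sumr; apply: eq_bigr => z _; ring.
Qed.

Lemma part1 (B : cmx R D) : antisym B -> A_like B ->
  (forall v : cvec R D, inE1 v -> inE1 (capply B v)) /\ E1_skew (capply B).
Proof.
move=> HB [HC HL]; split.
  move=> v Hv; apply: functional_extensionality => x.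
  rewrite -capply_cmul -HC capply_cmul Hv /capply mulr_sumr.
  apply: eq_bigr => y _; ring.
move=> u w _ _; rewrite /cdot /capply.
under eq_bigr => x _ do rewrite mulr_suml.
rewrite exchange_big /= -sumrN; apply: eq_bigr => y _.
rewrite mulr_sumr -sumrN; apply: eq_bigr => x _.
rewrite HB; ring.
Qed.

Lemma part2 (B1 B2 : cmx R D) : antisym B1 -> A_like B1 -> antisym B2 -> A_like B2 ->
     (forall v : cvec R D, inE1 v -> capply B1 v = capply B2 v) -> B1 = B2.
Proof.
move=> HB1 HL1 HB2 HL2 H.
rewrite (decomp HB1 HL1) (decomp HB2 HL2).
congr mkB.
apply: functional_extensionality => i; apply: functional_extensionality => x.
have G := congr1 (fun g => g x) (H _ (chi_inE1 i)); simpl in G.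
rewrite (decomp HB1 HL1) (decomp HB2 HL2) !capply_mkB_chi in G; try exact: sum_zero.
move: G; move/eqP; rewrite -subr_eq0.
have -> : forall a b : R, -2 * a * chi i x - -2 * b * chi i x = (a - b) * (-2 * chi i x) by move=> a b; ring.
rewrite mulf_eq0 mulf_eq0 oppr_eq0 pnatr_eq0 (negbTE (chi_neq0 i x)) /= orbF subr_eq0.
by move/eqP.
Qed.


Lemma flip_eq_sym (x y : X) m : (x == flip y m) = (y == flip x m).
Proof. by apply/eqP/eqP => ->; rewrite flipK. Qed.

Lemma mkB_antisym f : (forall m x, f m (flip x m) = - f m x) -> antisym (mkB f).
Proof.
move=> Hf x y; rewrite /mkB -sumrN; apply: eq_bigr => m _.
rewrite flip_eq_sym; case: eqP => [->|_]; last by rewrite /ind !mul0r oppr0.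
by rewrite Hf /ind mulrN.
Qed.

Lemma mkB_zero f (x y : X) : ~~ cube_adj x y -> mkB f x y = 0.
Proof.
move=> Ha; rewrite /mkB sum_flip_miss // => k; apply/eqP => E.
by rewrite E adj_flip in Ha.
Qed.

Lemma mkB_comm f :
  (forall m x, f m (flip x m) = - f m x) ->
  (forall x, \sum_m f m x = 0) ->
  (forall m n x, m != n -> f m x - f n (flip x m) + f n x - f m (flip x n) = 0) ->
  cmul (mkB f) (adjA R D) = cmul (adjA R D) (mkB f).
Proof.
move=> Hi Hii Hiii.
apply: functional_extensionality => x; apply: functional_extensionality => z.
rewrite adjA_mkB !cmul_mkB /mkB.
apply/eqP; rewrite -subr_eq0; apply/eqP.
set h := fun m n => ind (z == flip (flip x m) n) * (f m x - f n (flip x m)).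
have -> : \sum_m f m x * \sum_n ind (z == flip (flip x m) n) * 1 -
   \sum_m 1 * \sum_n ind (z == flip (flip x m) n) * f n (flip x m) = \sum_m \sum_n h m n.
  rewrite -sumrB; apply: eq_bigr => m _; rewrite !mulr_sumr -sumrB.
  apply: eq_bigr => n _; rewrite /h; ring.
apply: twice0.
have E : \sum_m \sum_n h m n + \sum_m \sum_n h m n = \sum_m \sum_n (h m n + h n m).
  rewrite {2}(exchange_big) /= -big_split; apply: eq_bigr => m _.
  by rewrite -big_split.
have E2 : \sum_m \sum_n (h m n + h n m) = 0.
  rewrite (eq_bigr (fun m => 2 * ind (z == x) * 2 * f m x)).
    by rewrite -mulr_sumr Hii mulr0.
  move=> m _; rewrite (bigD1 m) //= big1 ?addr0.
    by rewrite /h flipK Hi; ring.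
  move=> n Hn; rewrite /h flipC.
  have := Hiii m n x; rewrite eq_sym Hn => /(_ isT) H.
  rewrite -mulrDr (_ : f m x - f n (flip x m) + (f n x - f m (flip x n)) = 0) ?mulr0 //.
  by rewrite addrA.
rewrite E2 in E.
apply/eqP; rewrite -subr_eq0 opprK; by apply/eqP.
Qed.


Lemma cdotC (u w : cvec R D) : cdot u w = cdot w u.
Proof. by rewrite /cdot; apply: eq_bigr => x _; rewrite mulrC. Qed.

Lemma inE1_comb (a : R) (u w : cvec R D) : inE1 u -> inE1 w -> inE1 (fun x => a * u x + w x).
Proof.
move=> Hu Hw; apply: functional_extensionality => x.
have -> : capply (adjA R D) (fun x => a * u x + w x) x =
   a * capply (adjA R D) u x + capply (adjA R D) w x.
  rewrite /capply mulr_sumr -big_split; apply: eq_bigr => y _ /=; ring.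
rewrite Hu Hw /=; ring.
Qed.

Lemma inE1_0 : inE1 (fun _ : X => (0 : R)).
Proof.
apply: functional_extensionality => x; rewrite /capply big1 ?mulr0 // => y _; by rewrite mulr0.
Qed.

Section T.
Variable T : cvec R D -> cvec R D.
Hypothesis HT : E1_linear_endo T.
Hypothesis HS : E1_skew T.

Lemma T0 : T (fun _ => 0) = (fun _ => 0).
Proof.
have H := proj2 HT 1 _ _ inE1_0 inE1_0.
have e : (fun x : X => 1 * 0 + 0 : R) = (fun _ => 0).
  by apply: functional_extensionality => x; rewrite mulr0 addr0.
rewrite e in H.
apply: functional_extensionality => x.
have E := congr1 (fun g => g x) H; simpl in E; rewrite mul1r in E.
by rewrite -(addrK (T (fun _ => 0) x) (T (fun _ => 0) x)) -E subrr.
Qed.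

Lemma T_lin (c : 'I_D -> R) (s : seq 'I_D) :
  inE1 (fun y => \sum_(i <- s) c i * chi i y) /\
  T (fun y => \sum_(i <- s) c i * chi i y) = (fun y => \sum_(i <- s) c i * T (chi i) y).
Proof.
elim: s => [|j s [IH1 IH2]].
  have -> : (fun y : X => \sum_(i <- [::]) c i * chi i y) = (fun _ => 0).
    by apply: functional_extensionality => y; rewrite big_nil.
  have -> : (fun y : X => \sum_(i <- [::]) c i * T (chi i) y) = (fun _ => 0).
    by apply: functional_extensionality => y; rewrite big_nil.
  by split; [exact: inE1_0 | exact: T0].
have -> : (fun y : X => \sum_(i <- j :: s) c i * chi i y) =
   (fun y => c j * chi j y + (fun y => \sum_(i <- s) c i * chi i y) y).
  by apply: functional_extensionality => y; rewrite big_cons.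
split; first exact: inE1_comb (chi_inE1 j) IH1.
rewrite (proj2 HT _ _ _ (chi_inE1 j) IH1) IH2.
by apply: functional_extensionality => y; rewrite big_cons.
Qed.

Definition tT i l := cdot (T (chi i)) (chi l) / 2 ^+ D.
Definition fT m x := - (\sum_l tT m l * (chi m x * chi l x)) / 2.

Lemma tT_anti i l : tT l i = - tT i l.
Proof.
by rewrite /tT (HS (chi_inE1 l) (chi_inE1 i)) cdotC mulNr.
Qed.

Lemma tT_diag m : tT m m = 0.
Proof. apply: twice0; exact: tT_anti. Qed.

Lemma key n m x :
  \sum_l tT n l * (chi n (flip x m) * chi l (flip x m)) =
  (if n == m then -1 else 1) * (\sum_l tT n l * (chi n x * chi l x) - 2 * (tT n m * (chi n x * chi m x))).
Proof.
rewrite -(sum_eps (fun l => tT n l * (chi n x * chi l x))) mulr_sumr.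
apply: eq_bigr => l _; rewrite !chi_flip; set a := (if n == m then _ else _); set b := (if l == m then _ else _); ring.
Qed.

Lemma fT_i m x : fT m (flip x m) = - fT m x.
Proof. rewrite /fT key eqxx tT_diag; ring. Qed.

Lemma fT_ii x : \sum_m fT m x = 0.
Proof.
set S := \sum_m \sum_l tT m l * (chi m x * chi l x).
have HS0 : S = 0.
  apply: twice0; rewrite {1}/S exchange_big /= -sumrN; apply: eq_bigr => l _.
  rewrite -sumrN; apply: eq_bigr => m _; rewrite tT_anti; ring.
rewrite /fT (eq_bigr (fun m => (- \sum_l tT m l * (chi m x * chi l x)) * 2^-1)) //.
by rewrite -mulr_suml sumrN -/S HS0 oppr0 mul0r.
Qed.

Lemma fT_iii m n x : m != n -> fT m x - fT n (flip x m) + fT n x - fT m (flip x n) = 0.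
Proof.
move=> Hmn; rewrite /fT !key (negbTE Hmn) eq_sym (negbTE Hmn) (tT_anti n m); ring.
Qed.

Lemma BT_chi i x : capply (mkB fT) (chi i) x = \sum_l tT i l * chi l x.
Proof.
rewrite capply_mkB_chi ?fT_ii // /fT.
have c2 : chi i x * chi i x = 1 by exact: sgn_sq.
have -> : forall S : R, -2 * (- S / 2) = S.
  by move=> S; field.
rewrite mulr_suml; apply: eq_bigr => l _.
transitivity (tT i l * (chi i x * chi i x) * chi l x); first ring.
by rewrite c2 mulr1.
Qed.

Lemma T_chi i x : T (chi i) x = \sum_l tT i l * chi l x.
Proof. exact: span_E1 (proj1 HT _ (chi_inE1 i)). Qed.

Lemma part3 : exists B : cmx R D, antisym B /\ A_like B /\
       forall v : cvec R D, inE1 v -> capply B v = T v.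
Proof.
exists (mkB fT); split; first exact: mkB_antisym fT_i.
split; first split.
- apply: mkB_comm; [exact: fT_i | exact: fT_ii | exact: fT_iii].
- move=> x y _; exact: mkB_zero.
move=> v Hv.
have Ev : v = fun y => \sum_i (cdot v (chi i) / 2 ^+ D) * chi i y.
  by apply: functional_extensionality => y; exact: span_E1.
rewrite Ev (proj2 (T_lin _ _)).
apply: functional_extensionality => x.
rewrite /capply.
under eq_bigr => y _ do rewrite mulr_sumr.
rewrite exchange_big /=; apply: eq_bigr => i _.
rewrite T_chi -BT_chi /capply mulr_sumr; apply: eq_bigr => y _; ring.
Qed.

End T.
End Cube.

Unset Implicit Arguments.

Theorem proposition9p9 (R : realFieldType) (D : nat) (hD : (1 <= D)%N) :
  (forall B : cmx R D, antisym B -> A_like B ->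
     (forall v : cvec R D, inE1 v -> inE1 (capply B v)) /\ E1_skew (capply B)) /\
  (forall B1 B2 : cmx R D, antisym B1 -> A_like B1 -> antisym B2 -> A_like B2 ->
     (forall v : cvec R D, inE1 v -> capply B1 v = capply B2 v) -> B1 = B2) /\
  (forall T : cvec R D -> cvec R D, E1_linear_endo T -> E1_skew T ->
     exists B : cmx R D, antisym B /\ A_like B /\
       forall v : cvec R D, inE1 v -> capply B v = T v).
Proof.
split; first exact: part1.
split; first exact: part2.
move=> T HT HS; exact: part3.
Qed.

Print Assumptions proposition9p9.
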